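(* For any parameter $d>1$, every deterministic algorithm that solves the $d$-approximate $1$-region problem must make at least $\log\log n-\log\log(d+1)$ adaptive queries to the sorted input list $X[1,n]$ (in the worst case).
   Context: Logarithms are base $2$. The input is a list $X[1,n]$ whose entries are in $\{0,1\}$, sorted in nondecreasing order; the algorithm accesses it only by adaptive queries, each revealing one entry $X[i]$. A $d$-approximate $1$-region is an interval $R=[s,n]$ (containing the last position $n$) such that at least $\frac{|R|}{d}$ of the numbers in $X[s,n]$ equal $1$, and $[s,n]$ contains all positions $j$ with $X[j]=1$; here $|R|$ is the number of integers in $R$. *)

(* Defs.v *)
From Stdlib Require Import Reals Arith List.
Open Scope R_scope.

Definition log2 (x : R) : R := ln x / ln 2.

(* An input of length n is a function X : nat -> bool; only positions
   1..n are meaningful (true = 1, false = 0). *)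

Definition sorted_input (n : nat) (X : nat -> bool) : Prop :=
  forall i j : nat, (1 <= i)%nat -> (i <= j)%nat -> (j <= n)%nat ->
    X i = true -> X j = true.

(* At least one entry equals 1 (otherwise no 1-region exists). *)
Definition has_one (n : nat) (X : nat -> bool) : Prop :=
  exists j : nat, (1 <= j)%nat /\ (j <= n)%nat /\ X j = true.

Definition ones_from (n : nat) (X : nat -> bool) (s : nat) : nat :=
  fold_right (fun j acc => (if X j then 1 else 0) + acc)%nat 0%nat
             (seq s (S n - s)).

Definition approx_region (d : R) (n : nat) (X : nat -> bool) (s : nat) : Prop :=
  (1 <= s)%nat /\ (s <= n)%nat /\
  INR (S n - s) / d <= INR (ones_from n X s) /\
  (forall j : nat, (1 <= j)%nat -> (j <= n)%nat -> X j = true -> (s <= j)%nat).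

(* Deterministic adaptive query algorithm = binary decision tree.
   [Ask i t0 t1] queries X[i] and continues with t0 if X[i] = 0, with t1 if
   X[i] = 1; [Out s] outputs the interval [s,n]. *)
Inductive dtree : Type :=
| Out : nat -> dtree
| Ask : nat -> dtree -> dtree -> dtree.

Definition answer (n : nat) (X : nat -> bool) (i : nat) : bool :=
  if andb (Nat.leb 1 i) (Nat.leb i n) then X i else false.

Fixpoint output (n : nat) (X : nat -> bool) (t : dtree) : nat :=
  match t with
  | Out s => s
  | Ask i t0 t1 => if answer n X i then output n X t1 else output n X t0
  end.

Fixpoint queries (n : nat) (X : nat -> bool) (t : dtree) : nat :=
  match t with
  | Out _ => 0
  | Ask i t0 t1 => S (if answer n X i then queries n X t1 else queries n X t0)
  end.

Definition solves (d : R) (n : nat) (t : dtree) : Prop :=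
  forall X : nat -> bool, sorted_input n X -> has_one n X ->
    approx_region d n X (output n X t).

(* Main.v *)
Require Import Defs.
From Stdlib Require Import Reals Lra Lia Arith List.
Open Scope R_scope.

Definition Xp (p : nat) : nat -> bool := fun j => Nat.leb p j.

Lemma fold_count (p : nat) : forall k s,
  fold_right (fun j acc => (if Xp p j then 1 else 0) + acc)%nat 0%nat (seq s k)
  = ((s + k) - Nat.max s p)%nat.
Proof.
  induction k as [|k IH]; intros s; simpl.
  - lia.
  - rewrite IH. unfold Xp. destruct (Nat.leb_spec p s); lia.
Qed.

Lemma ones_Xp n p s : (s <= p)%nat -> (p <= n)%nat ->
  ones_from n (Xp p) s = (S n - p)%nat.
Proof. intros. unfold ones_from. rewrite fold_count. lia. Qed.

Lemma sorted_Xp n p : sorted_input n (Xp p).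
Proof. intros i j _ Hij _ H. unfold Xp in *. apply Nat.leb_le in H. apply Nat.leb_le. lia. Qed.

Lemma has_one_Xp n p : (1 <= p)%nat -> (p <= n)%nat -> has_one n (Xp p).
Proof. intros. exists p. unfold Xp. rewrite Nat.leb_refl. auto. Qed.

Definition K (d : R) (q : nat) : R := (d + 1) ^ (2 ^ q).

Lemma K_ge1 d q : 0 < d -> 1 <= K d q.
Proof. intros. unfold K. apply pow_R1_Rle. lra. Qed.

Lemma K_mono d q1 q2 : 0 < d -> (q1 <= q2)%nat -> K d q1 <= K d q2.
Proof. intros. unfold K. apply Rle_pow. lra. apply Nat.pow_le_mono_r; lia. Qed.

Lemma K_S d q : K d (S q) = K d q * K d q.
Proof. unfold K. rewrite Nat.pow_succ_r', Nat.mul_comm, pow_mult. simpl. ring. Qed.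

Definition corr (d : R) (n : nat) (t : dtree) (lo hi : nat) : Prop :=
  forall p, (lo <= p)%nat -> (p <= hi)%nat ->
    (output n (Xp p) t <= p)%nat /\
    INR n + 1 - INR (output n (Xp p) t) <= d * (INR n + 1 - INR p).

Lemma core d n (Hd : 1 < d) : forall t lo hi, (1 <= lo)%nat -> (lo <= hi)%nat -> (hi <= n)%nat ->
  corr d n t lo hi ->
  exists p, (lo <= p)%nat /\ (p <= hi)%nat /\
    INR n + 2 - INR lo <= (INR n + 1 - INR hi) * K d (queries n (Xp p) t).
Proof.
  induction t as [s | i t0 IH0 t1 IH1]; intros lo hi H1 H2 H3 C.
  - exists hi. split; [lia|split;[lia|]].
    destruct (C lo) as [A _]; try lia. destruct (C hi) as [_ B]; try lia.
    simpl in *. unfold K. simpl.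
    apply le_INR in A. apply le_INR in H3. lra.
  - assert (Hans : forall p, answer n (Xp p) i =
             andb (andb (Nat.leb 1 i) (Nat.leb i n)) (Nat.leb p i)).
    { intros p. unfold answer, Xp. destruct (andb _ _); reflexivity. }
    assert (Hn : forall p, (lo <= p)%nat -> (p <= hi)%nat ->
               output n (Xp p) (Ask i t0 t1) = if answer n (Xp p) i then output n (Xp p) t1 else output n (Xp p) t0) by reflexivity.
    assert (All : forall b, (forall p, (lo <= p)%nat -> (p <= hi)%nat -> answer n (Xp p) i = b) ->
      exists p, (lo <= p)%nat /\ (p <= hi)%nat /\
      INR n + 2 - INR lo <= (INR n + 1 - INR hi) * K d (queries n (Xp p) (Ask i t0 t1))).
    { intros b Hb.
      assert (Hq : forall p, (lo <= p)%nat -> (p <= hi)%nat -> queries n (Xp p) (Ask i t0 t1) =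
                 S (if b then queries n (Xp p) t1 else queries n (Xp p) t0)).
      { intros p Hp1 Hp2. simpl. rewrite (Hb p Hp1 Hp2). reflexivity. }
      assert (Hhi : 0 <= INR n + 1 - INR hi) by (apply le_INR in H3; lra).
      destruct b.
      + destruct (IH1 lo hi H1 H2 H3) as [p [Hp1 [Hp2 Hp]]].
        { intros p Hp1 Hp2. destruct (C p Hp1 Hp2) as [A B]. simpl in A, B.
          rewrite (Hb p Hp1 Hp2) in A, B. auto. }
        exists p. split;[lia|split;[lia|]]. rewrite Hq by lia.
        eapply Rle_trans; [exact Hp|]. apply Rmult_le_compat_l; auto. apply K_mono; [lra|lia].
      + destruct (IH0 lo hi H1 H2 H3) as [p [Hp1 [Hp2 Hp]]].
        { intros p Hp1 Hp2. destruct (C p Hp1 Hp2) as [A B]. simpl in A, B.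
          rewrite (Hb p Hp1 Hp2) in A, B. auto. }
        exists p. split;[lia|split;[lia|]]. rewrite Hq by lia.
        eapply Rle_trans; [exact Hp|]. apply Rmult_le_compat_l; auto. apply K_mono; [lra|lia]. }
    destruct (Nat.leb_spec 1 i); [|apply (All false); (intros; rewrite Hans; repeat match goal with |- context[Nat.leb ?a ?b] => destruct (Nat.leb_spec a b) end; simpl; try reflexivity; lia)].
    destruct (Nat.leb_spec i n); [|apply (All false); (intros; rewrite Hans; repeat match goal with |- context[Nat.leb ?a ?b] => destruct (Nat.leb_spec a b) end; simpl; try reflexivity; lia)].
    destruct (Nat.leb_spec hi i).
    { apply (All true). (intros; rewrite Hans; repeat match goal with |- context[Nat.leb ?a ?b] => destruct (Nat.leb_spec a b) end; simpl; try reflexivity; lia). }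
    destruct (Nat.leb_spec lo i).
    2: { apply (All false). (intros; rewrite Hans; repeat match goal with |- context[Nat.leb ?a ?b] => destruct (Nat.leb_spec a b) end; simpl; try reflexivity; lia). }
    assert (Ht : forall p, (lo <= p)%nat -> (p <= i)%nat -> answer n (Xp p) i = true).
    { (intros; rewrite Hans; repeat match goal with |- context[Nat.leb ?a ?b] => destruct (Nat.leb_spec a b) end; simpl; try reflexivity; lia). }
    assert (Hf : forall p, (S i <= p)%nat -> (p <= hi)%nat -> answer n (Xp p) i = false).
    { (intros; rewrite Hans; repeat match goal with |- context[Nat.leb ?a ?b] => destruct (Nat.leb_spec a b) end; simpl; try reflexivity; lia). }
    destruct (IH1 lo i) as [p1 [Hp1 [Hp1' E1]]]; try lia.
    { intros p Hp1 Hp2. destruct (C p Hp1 ltac:(lia)) as [A B]. simpl in A, B.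
      rewrite (Ht p Hp1 Hp2) in A, B. auto. }
    destruct (IH0 (S i) hi) as [p2 [Hp2 [Hp2' E2]]]; try lia.
    { intros p Hpa Hpb. destruct (C p ltac:(lia) Hpb) as [A B]. simpl in A, B.
      rewrite (Hf p Hpa Hpb) in A, B. auto. }
    rewrite S_INR in E2.
    set (q1 := queries n (Xp p1) t1) in *. set (q2 := queries n (Xp p2) t0) in *.
    assert (Hq1 : queries n (Xp p1) (Ask i t0 t1) = S q1).
    { simpl. rewrite (Ht p1 Hp1 Hp1'). reflexivity. }
    assert (Hq2 : queries n (Xp p2) (Ask i t0 t1) = S q2).
    { simpl. rewrite (Hf p2 Hp2 Hp2'). reflexivity. }
    assert (Hhi : 0 <= INR n + 1 - INR hi) by (apply le_INR in H3; lra).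
    assert (Hi : 0 <= INR n + 1 - INR i) by (apply le_INR in H0; lra).
    assert (Hd0 : 0 < d) by lra.
    pose proof (K_ge1 d q1 Hd0). pose proof (K_ge1 d q2 Hd0).
    assert (Comb : INR n + 2 - INR lo <= (INR n + 1 - INR hi) * (K d q1 * K d q2)).
    { eapply Rle_trans; [exact E1|].
      replace ((INR n + 1 - INR hi) * (K d q1 * K d q2)) with (((INR n + 1 - INR hi) * K d q2) * K d q1) by ring.
      apply Rmult_le_compat_r; [lra|]. lra. }
    destruct (Nat.le_ge_cases q2 q1).
    + exists p1. split;[lia|split;[lia|]]. rewrite Hq1, K_S.
      eapply Rle_trans; [exact Comb|]. apply Rmult_le_compat_l; auto.
      apply Rmult_le_compat_l; [lra|]. apply K_mono; auto.
    + exists p2. split;[lia|split;[lia|]]. rewrite Hq2, K_S.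
      eapply Rle_trans; [exact Comb|]. apply Rmult_le_compat_l; auto.
      apply Rmult_le_compat_r; [lra|]. apply K_mono; auto.
Qed.

Lemma ln_le x y : 0 < x -> x <= y -> ln x <= ln y.
Proof. intros. destruct (Rle_lt_or_eq_dec _ _ H0). left; apply ln_increasing; auto. subst; lra. Qed.

Theorem theorem3 (d : R) (n : nat) (t : dtree) :
  1 < d -> (1 <= n)%nat -> solves d n t ->
  exists X : nat -> bool,
    sorted_input n X /\ has_one n X /\
    log2 (log2 (INR n)) - log2 (log2 (d + 1)) <= INR (queries n X t).
Proof.
  intros Hd Hn Hs.
  assert (C : corr d n t 1 n).
  { intros p Hp1 Hp2. destruct (Hs (Xp p) (sorted_Xp n p) (has_one_Xp n p Hp1 Hp2)) as [A [B [E F]]].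
    set (s := output n (Xp p) t) in *.
    assert (Hsp : (s <= p)%nat).
    { apply F; auto. unfold Xp. apply Nat.leb_refl. }
    split; auto.
    rewrite ones_Xp in E by auto.
    rewrite !minus_INR in E by lia. rewrite S_INR in E.
    apply Rmult_le_compat_r with (r := d) in E; [|lra].
    unfold Rdiv in E. rewrite Rmult_assoc, Rinv_l in E by lra. lra. }
  destruct (core d n Hd t 1 n ltac:(lia) Hn ltac:(lia) C) as [p [Hp1 [Hp2 E]]].
  exists (Xp p). split; [apply sorted_Xp|split; [apply has_one_Xp; auto|]].
  set (q := queries n (Xp p) t) in *.
  simpl in E. replace (INR n + 2 - 1) with (INR n + 1) in E by ring.
  replace (INR n + 1 - INR n) with 1 in E by ring. rewrite Rmult_1_l in E.
  assert (Hl2 : 0 < ln 2) by (pose proof ln_lt_2; lra).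
  assert (Hld : ln 2 < ln (d + 1)) by (apply ln_increasing; lra).
  assert (Hlog_d : 1 < log2 (d + 1)).
  { unfold log2. apply Rmult_lt_reg_r with (ln 2); auto. unfold Rdiv. rewrite Rmult_assoc, Rinv_l; lra. }
  assert (Hll_d : 0 < log2 (log2 (d + 1))).
  { unfold log2 at 1. unfold Rdiv. apply Rmult_lt_0_compat; [|apply Rinv_0_lt_compat; auto].
    rewrite <- ln_1. apply ln_increasing; lra. }
  pose proof (pos_INR q).
  destruct (Nat.eq_dec n 1) as [->|Hn2].
  { assert (L0 : ln 0 = 0) by (unfold ln; destruct (Rlt_dec 0 0) as [r|r]; [exfalso; exact (Rlt_irrefl 0 r)|reflexivity]).
    assert (E1 : log2 (INR 1) = 0) by (unfold log2; simpl; rewrite ln_1; unfold Rdiv; ring).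
    rewrite E1. assert (E0 : log2 0 = 0) by (unfold log2; rewrite L0; unfold Rdiv; ring).
    rewrite E0. lra. }
  assert (HnR : 2 <= INR n) by (replace 2 with (INR 2) by (simpl; ring); apply le_INR; lia).
  assert (Hln : ln 2 <= ln (INR n)) by (apply ln_le; lra).
  assert (Hlog_n : 1 <= log2 (INR n)).
  { unfold log2. apply Rmult_le_reg_r with (ln 2); auto. unfold Rdiv. rewrite Rmult_assoc, Rinv_l; lra. }
  assert (A : ln (INR n) <= INR (2 ^ q) * ln (d + 1)).
  { rewrite <- ln_pow by lra. apply ln_le; [lra|]. unfold K in E. lra. }
  assert (B : log2 (INR n) <= INR (2 ^ q) * log2 (d + 1)).
  { unfold log2, Rdiv. rewrite <- Rmult_assoc. apply Rmult_le_compat_r; auto.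
    left; apply Rinv_0_lt_compat; auto. }
  assert (Cq : ln (log2 (INR n)) <= INR q * ln 2 + ln (log2 (d + 1))).
  { assert (P2 : 0 < 2 ^ q) by (apply pow_lt; lra).
    rewrite <- ln_pow by lra. rewrite <- ln_mult by lra. apply ln_le; [lra|].
    rewrite pow_INR in B. simpl (INR 2) in B. replace (1+1) with 2 in B by ring. lra. }
  unfold log2 at 1 3. unfold Rdiv.
  apply Rmult_le_reg_r with (ln 2); auto.
  rewrite Rmult_minus_distr_r, !Rmult_assoc, !Rinv_l by lra. lra.
Qed.
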